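(* Fix $d\in\mathbb N$ and $k\le d$, and let $S_\star\subseteq[d]$ with $|S_\star|=k$ be unknown. Suppose samples $\{(x^{(i)},\tilde z^{(i)})\}_{i=1}^m$ are generated under propagating noise with level $\eta\in[0,1/2)$, where the orderings $\pi^{(1)},\dots,\pi^{(m)}$ may be chosen adversarially based on $(x^{(1)},\dots,x^{(m)})$. Then there is a universal constant $C>0$ such that for every $\delta\in(0,1)$, if $m\ge C\cdot\frac{k}{(1-2\eta)^2}\log\frac d\delta$, the output $\hat S$ of the Support Recovery Algorithm satisfies $\Pr[\hat S=S_\star]\ge1-\delta$.
   Context: Data model: $x^{(1)},\dots,x^{(m)}$ are i.i.d. uniform on $\{0,1\}^d$. For each $i$, a bijection $\pi^{(i)}:[k]\to S_\star$ (an ordering of $S_\star$) is chosen (possibly adversarially as a function of all the inputs). With $\xi^{(i)}_1,\dots,\xi^{(i)}_k$ i.i.d. $\mathrm{Bern}(\eta)$, independent of everything else, the observed chain is $\tilde z^{(i)}=(\tilde z^{(i)}_1,\dots,\tilde z^{(i)}_k)$ with $\tilde z^{(i)}_0=0$ and $\tilde z^{(i)}_t=\tilde z^{(i)}_{t-1}\oplus x^{(i)}_{\pi^{(i)}(t)}\oplus\xi^{(i)}_t$ for $t=1,\dots,k$ (equivalently $\tilde z^{(i)}_t=\bigoplus_{s\le t}x^{(i)}_{\pi^{(i)}(s)}\oplus\bigoplus_{s\le t}\xi^{(i)}_s$). Support Recovery Algorithm: with $\tilde z^{(i)}_0=0$, set $\tilde\delta^{(i)}_t=1-2(\tilde z^{(i)}_t\oplus\tilde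 z^{(i)}_{t-1})$ and $\tilde s^{(i)}=\sum_{t=1}^k\tilde\delta^{(i)}_t$; for each $j\in[d]$ compute $\mathrm{score}(j)=\frac1m\sum_{i=1}^m(1-2x^{(i)}_j)\tilde s^{(i)}$; output $\hat S$ as the $k$ indices with largest score. *)

(* Defs.v *)
From HB Require Import structures.
From mathcomp Require Import all_boot all_order all_algebra.
From mathcomp Require Import reals exp Rstruct.
Set Implicit Arguments. Unset Strict Implicit. Unset Printing Implicit Defensive.
Import Order.TTheory GRing.Theory Num.Theory.
Local Open Scope ring_scope.

Notation RR := Rdefinitions.R.

Definition inputs (m d : nat) := {ffun 'I_m -> {ffun 'I_d -> bool}}.
(* noise bits xi i t = xi^{(i)}_{t+1} *)
Definition noises (m k : nat) := {ffun 'I_m -> {ffun 'I_k -> bool}}.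

(* Adversarial orderings: for every input vector x and sample i,
   ord x i : 'I_k -> 'I_d (ord x i t = pi^{(i)}(t+1)). *)
Definition orderings (m d k : nat) := inputs m d -> 'I_m -> 'I_k -> 'I_d.

Definition valid_orderings (m d k : nat) (Sstar : {set 'I_d})
  (pi : orderings m d k) : Prop :=
  forall (x : inputs m d) (i : 'I_m),
    injective (pi x i) /\ (forall t, pi x i t \in Sstar) /\
    (forall j, j \in Sstar -> exists t, pi x i t = j).

(* observed chain: ztilde n = z~^{(i)}_n for n = 0..k,
   z~_n = XOR_{s <= n} (x_{pi(s)} xor xi_s), z~_0 = 0 *)
Definition ztilde (m d k : nat) (pi : orderings m d k) (x : inputs m d)
  (xi : noises m k) (i : 'I_m) (n : nat) : bool :=
  \big[addb/false]_(s < k | (s < n)%N) (x i (pi x i s) (+) xi i s).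

(* delta~_t = 1 - 2 (z~_t xor z~_{t-1}), for t = 1..k (here t : 'I_k means t+1) *)
Definition deltat (m d k : nat) (pi : orderings m d k) (x : inputs m d)
  (xi : noises m k) (i : 'I_m) (t : 'I_k) : RR :=
  1 - 2 * ((ztilde pi x xi i t.+1 (+) ztilde pi x xi i t : bool) : nat)%:R.

Definition stilde (m d k : nat) (pi : orderings m d k) (x : inputs m d)
  (xi : noises m k) (i : 'I_m) : RR :=
  \sum_(t < k) deltat pi x xi i t.

Definition score (m d k : nat) (pi : orderings m d k) (x : inputs m d)
  (xi : noises m k) (j : 'I_d) : RR :=
  (m%:R)^-1 * \sum_(i < m) (1 - 2 * ((x i j : nat)%:R)) * stilde pi x xi i.

(* "S_hat = S_star": every admissible output of the algorithm (any set of
   k indices with the largest scores, under any tie-breaking) equals S_star. *)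
Definition recovers (m d k : nat) (Sstar : {set 'I_d}) (pi : orderings m d k)
  (x : inputs m d) (xi : noises m k) : bool :=
  [forall T : {set 'I_d},
     ((#|T| == k) &&
      [forall j in T, forall j' in ~: T, score pi x xi j' <= score pi x xi j])
     ==> (T == Sstar)].

Definition bern (eta : RR) (b : bool) : RR := if b then eta else 1 - eta.

Definition weight (m d k : nat) (eta : RR) (x : inputs m d) (xi : noises m k) : RR :=
  (\prod_(i < m) \prod_(j < d) (2%:R)^-1) *
  (\prod_(i < m) \prod_(t < k) bern eta (xi i t)).

Definition success_prob (m d k : nat) (eta : RR) (Sstar : {set 'I_d})
  (pi : orderings m d k) : RR :=
  \sum_(x : inputs m d) \sum_(xi : noises m k)
     (if recovers Sstar pi x xi then weight eta x xi else 0).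

(* Main.v *)
Require Import Defs.
From HB Require Import structures.
From mathcomp Require Import all_boot all_order all_algebra.
From mathcomp Require Import reals exp Rstruct sequences.
From mathcomp Require Import lra ring.
Import Order.TTheory GRing.Theory Num.Theory.
Local Open Scope ring_scope.
Set Implicit Arguments. Unset Strict Implicit. Unset Printing Implicit Defensive.

Definition sg (b : bool) : RR := 1 - 2 * (b : nat)%:R.

Lemma ztildeS m d k (pi : orderings m d k) x xi i (t : 'I_k) :
  ztilde pi x xi i t.+1 = ztilde pi x xi i t (+) (x i (pi x i t) (+) xi i t).
Proof.
rewrite /ztilde (bigD1 t) ?ltnSn //= addbC; congr (_ (+) _).
apply: eq_bigl => s; rewrite ltnS.
by rewrite ltn_neqAle andbC; congr (_ && _); rewrite -(inj_eq val_inj).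
Qed.

Lemma deltatE m d k (pi : orderings m d k) x xi i (t : 'I_k) :
  deltat pi x xi i t = sg (x i (pi x i t)) * sg (xi i t).
Proof.
rewrite /deltat ztildeS /sg.
case: (ztilde _ _ _ _ _); case: (x i _); case: (xi i t) => /=; ring.
Qed.

Lemma sum_ffun2 (I J T : finType) (F : I -> J -> T -> RR) :
  \sum_(x : {ffun I -> {ffun J -> T}}) \prod_i \prod_j F i j (x i j)
  = \prod_i \prod_j \sum_(b : T) F i j b.
Proof.
transitivity (\prod_i \sum_(v : {ffun J -> T}) \prod_j F i j (v j)).
  by rewrite bigA_distr_bigA.
by apply: eq_bigr => i _; rewrite bigA_distr_bigA.
Qed.

Lemma expR_le_quad (x : RR) : x <= 2^-1 -> expR x <= 1 + x + 2 * x ^+ 2.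
Proof.
move=> hx.
have e0 := expR_gt0 x.
have ef : expR x * expR (- x) = 1 := expRxMexpNx_1 x.
have hf : 1 - x <= expR (- x) by have := expR_ge1Dx (- x); lra.
set q := 1 + x + 2 * x ^+ 2.
have q0 : 0 <= q by rewrite /q; nra.
have h2 : 1 <= (1 - x) * q.
  have -> : (1 - x) * q = 1 + x ^+ 2 * (1 - 2 * x) by rewrite /q; ring.
  have : 0 <= x ^+ 2 * (1 - 2 * x) by apply: mulr_ge0; [exact: sqr_ge0| lra].
  lra.
have h3 : 1 <= expR (- x) * q.
  apply: (le_trans h2); apply: ler_wpM2r => //.
have : expR x * 1 <= expR x * (expR (- x) * q) by apply: ler_wpM2l => //; exact: ltW.
by rewrite mulr1 mulrA ef mul1r.
Qed.

Section PerSample.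
Variables (d : nat) (S : {set 'I_d}) (j : 'I_d) (h : RR -> RR).

Definition phi (y : {ffun 'I_d -> bool}) : {ffun 'I_d -> bool} :=
  [ffun a => if (a \in S) && (a != j) then y a (+) y j else y a].

Lemma phi_j y : phi y j = y j.
Proof. by rewrite /phi ffunE eqxx andbF. Qed.

Lemma phiK : involutive phi.
Proof.
move=> y; apply/ffunP => a; rewrite {1}/phi ffunE phi_j /phi ffunE.
by case: ((a \in S) && (a != j)); case: (y a); case: (y j).
Qed.

Definition Hf (a : 'I_d) (b : bool) : RR :=
  if a \in S then h (if a == j then 1 else sg b) else 1.

Lemma subst_sum :
  \sum_(y : {ffun 'I_d -> bool})
     (\prod_(j' < d) (2 : RR)^-1) * \prod_(a in S) h (sg (y j) * sg (y a))
  = \prod_(a < d) (2^-1 * Hf a true + 2^-1 * Hf a false).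
Proof.
rewrite (reindex_inj (can_inj phiK)).
transitivity (\sum_(y : {ffun 'I_d -> bool}) \prod_(a < d) (2^-1 * Hf a (y a))).
  apply: eq_bigr => y _.
  rewrite big_split /=; congr (_ * _).
  rewrite /Hf -big_mkcond /=; apply: eq_bigr => a aS.
  rewrite phi_j /phi ffunE aS /=.
  case: eqP => [->|_] /=.
    by congr h; case: (y j); rewrite /sg /=; ring.
  by congr h; case: (y j); case: (y a); rewrite /sg /=; ring.
symmetry; transitivity (\prod_(a < d) \sum_(b : bool) 2^-1 * Hf a b).
  by apply: eq_bigr => a _; rewrite big_bool.
by rewrite bigA_distr_bigA.
Qed.
End PerSample.

Lemma sgT : sg true = -1. Proof. rewrite /sg /=; ring. Qed.
Lemma sgF : sg false = 1. Proof. rewrite /sg /=; ring. Qed.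

Definition hh (eta mu c : RR) : RR :=
  \sum_(b : bool) bern eta b * expR (mu * c * sg b).

Lemma hhE eta mu c :
  hh eta mu c = eta * expR (- (mu * c)) + (1 - eta) * expR (mu * c).
Proof. by rewrite /hh big_bool /= sgT sgF mulrN1 mulr1. Qed.

Lemma hh_ge0 eta mu c : 0 <= eta <= 1 -> 0 <= hh eta mu c.
Proof.
move=> /andP[e0 e1]; rewrite hhE.
apply: addr_ge0; apply: mulr_ge0 => //; rewrite ?subr_ge0 //; exact: expR_ge0.
Qed.

Lemma hh1 eta mu : 0 <= eta <= 1 -> mu <= 2^-1 -> - mu <= 2^-1 ->
  hh eta mu 1 <= expR ((1 - 2 * eta) * mu + 2 * mu ^+ 2).
Proof.
move=> /andP[e0 e1] m1 m2; rewrite hhE mulr1.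
have A := expR_le_quad m1.
have B := expR_le_quad m2.
apply: (le_trans _ (expR_ge1Dx _)).
have : eta * expR (- mu) <= eta * (1 + - mu + 2 * (- mu) ^+ 2) by apply: ler_wpM2l.
have : (1 - eta) * expR mu <= (1 - eta) * (1 + mu + 2 * mu ^+ 2)
  by apply: ler_wpM2l; lra.
rewrite sqrrN. nra.
Qed.

Lemma hhavg eta mu : mu <= 2^-1 -> - mu <= 2^-1 ->
  2^-1 * hh eta mu (sg true) + 2^-1 * hh eta mu (sg false) <= expR (2 * mu ^+ 2).
Proof.
move=> m1 m2; rewrite !hhE sgT sgF mulrN1 mulr1 opprK.
have A := expR_le_quad m1.
have B := expR_le_quad m2.
apply: (le_trans _ (expR_ge1Dx _)).
rewrite sqrrN in B. nra.
Qed.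

Lemma per_sample_bound d (S : {set 'I_d}) (j : 'I_d) eta mu :
  0 <= eta <= 1 -> mu <= 2^-1 -> - mu <= 2^-1 ->
  \sum_(y : {ffun 'I_d -> bool})
     (\prod_(j' < d) (2 : RR)^-1) * \prod_(a in S) hh eta mu (sg (y j) * sg (y a))
  <= expR ((if j \in S then (1 - 2 * eta) * mu else 0) + #|S|%:R * (2 * mu ^+ 2)).
Proof.
move=> he m1 m2.
have half : forall z : RR, 2^-1 * z + 2^-1 * z = z by move=> z; lra.
rewrite (subst_sum S j (hh eta mu)).
pose V (a : 'I_d) : RR :=
  (if a \in S then 2 * mu ^+ 2 else 0) +
  (if a == j then (if j \in S then (1 - 2 * eta) * mu else 0) else 0).
apply: (@le_trans _ _ (\prod_(a < d) expR (V a))).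
  apply: ler_prod => a _; apply/andP; split.
    by apply: addr_ge0; apply: mulr_ge0; rewrite ?invr_ge0 ?ler0n //; rewrite /Hf;
      case: ifP => _ //; apply: hh_ge0.
  rewrite /Hf /V; case: (boolP (a \in S)) => aS.
    case: eqP => [e|_]; first subst a.
      rewrite aS half.
      by apply: (le_trans (hh1 he m1 m2)); rewrite addrC.
    by rewrite addr0 /=; apply: hhavg.
  have -> : (if a == j then (if j \in S then (1 - 2 * eta) * mu else 0) else 0) = 0.
    by case: eqP => // e; subst a; rewrite (negbTE aS).
  by rewrite addr0 exp.expR0 half.
rewrite -expR_sum le_eqVlt; apply/orP; left; apply/eqP; congr expR.
rewrite /V big_split /= addrC.
by rewrite -big_mkcond big_pred1_eq -big_mkcond /= sumr_const (mulr_natl (2 * mu ^+ 2) #|S|).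
Qed.

Lemma reindex_S d k (S : {set 'I_d}) (f : 'I_k -> 'I_d) (G : 'I_d -> RR) :
  injective f -> (forall t, f t \in S) -> (forall a, a \in S -> exists t, f t = a) ->
  \prod_t G (f t) = \prod_(a in S) G a.
Proof.
move=> finj fS Sf.
have -> : S = f @: setT.
  apply/setP => a; apply/idP/imsetP.
    by move=> /Sf [t <-]; exists t; rewrite ?in_setT.
  by move=> [t _ ->].
rewrite big_imset /=; last by move=> ? ? _ _; apply: finj.
by apply: eq_bigl => t; rewrite in_setT.
Qed.

Definition Z m d k (pi : orderings m d k) (x : inputs m d) (xi : noises m k) (j : 'I_d) : RR :=
  \sum_(i < m) sg (x i j) * stilde pi x xi i.

Definition Aw m d (x : inputs m d) : RR := \prod_(i < m) \prod_(j < d) (2 : RR)^-1.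

Lemma expZ m d k (pi : orderings m d k) (x : inputs m d) (xi : noises m k) j mu :
  expR (mu * Z pi x xi j) =
  \prod_(i < m) \prod_(t < k)
     expR (mu * (sg (x i j) * sg (x i (pi x i t))) * sg (xi i t)).
Proof.
rewrite /Z mulr_sumr expR_sum; apply: eq_bigr => i _.
rewrite /stilde mulr_sumr mulr_sumr expR_sum; apply: eq_bigr => t _.
by rewrite deltatE !mulrA.
Qed.

Lemma sum_xi m d k (pi : orderings m d k) (x : inputs m d) j eta mu :
  \sum_(xi : noises m k) weight eta x xi * expR (mu * Z pi x xi j) =
  Aw x * \prod_(i < m) \prod_(t < k) hh eta mu (sg (x i j) * sg (x i (pi x i t))).
Proof.
under eq_bigr => xi _ do rewrite expZ /weight -mulrA -big_split /=.
rewrite -mulr_sumr; congr (_ * _).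
under eq_bigr => xi _ do under eq_bigr => i _ do rewrite -big_split /=.
by rewrite (sum_ffun2 (fun i t b => bern eta b *
            expR (mu * (sg (x i j) * sg (x i (pi x i t))) * sg b))).
Qed.

Lemma prod_ord_const m (c : RR) : \prod_(i < m) c = c ^+ m.
Proof. by rewrite prodr_const card_ord. Qed.

Lemma mgf m d k (S : {set 'I_d}) (pi : orderings m d k) j eta mu :
  valid_orderings S pi ->
  0 <= eta <= 1 -> mu <= 2^-1 -> - mu <= 2^-1 ->
  \sum_(x : inputs m d) \sum_(xi : noises m k) weight eta x xi * expR (mu * Z pi x xi j)
  <= expR (m%:R * ((if j \in S then (1 - 2 * eta) * mu else 0) + #|S|%:R * (2 * mu ^+ 2))).
Proof.
move=> vo he m1 m2.
under eq_bigr => x _ do rewrite sum_xi.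
have E : forall x : inputs m d,
  Aw x * \prod_(i < m) \prod_(t < k) hh eta mu (sg (x i j) * sg (x i (pi x i t)))
  = \prod_(i < m) ((\prod_(j' < d) (2 : RR)^-1) *
        \prod_(a in S) hh eta mu (sg (x i j) * sg (x i a))).
  move=> x; rewrite /Aw -big_split /=; apply: eq_bigr => i _; congr (_ * _).
  have [inj [inS onto]] := vo x i.
  exact: (reindex_S (fun a => hh eta mu (sg (x i j) * sg (x i a))) inj inS onto).
under eq_bigr => x _ do rewrite E.
rewrite -(bigA_distr_bigA (fun (i : 'I_m) (y : {ffun 'I_d -> bool}) =>
     (\prod_(j' < d) (2 : RR)^-1) * \prod_(a in S) hh eta mu (sg (y j) * sg (y a)))).
rewrite expRM_natl -prod_ord_const.
apply: ler_prod => i _; apply/andP; split.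
  apply: sumr_ge0 => y _; apply: mulr_ge0.
    by apply: prodr_ge0 => ? _; rewrite invr_ge0 ler0n.
  by apply: prodr_ge0 => a _; apply: hh_ge0.
exact: per_sample_bound.
Qed.

Lemma total_weight m d k eta :
  \sum_(x : inputs m d) \sum_(xi : noises m k) weight eta x xi = 1.
Proof.
rewrite /weight.
under eq_bigr => x _ do rewrite -mulr_sumr.
rewrite -mulr_suml.
rewrite (sum_ffun2 (fun (i : 'I_m) (j : 'I_d) (b : bool) => (2 : RR)^-1)).
rewrite (sum_ffun2 (fun (i : 'I_m) (j : 'I_k) (b : bool) => bern eta b)).
rewrite big1 ?mul1r; last by move=> i _; rewrite big1 // => a _; rewrite big_bool /=; lra.
by rewrite big1 // => i _; rewrite big1 // => a _; rewrite big_bool /= /bern; lra.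
Qed.

Lemma good_recovers m d k (S : {set 'I_d}) (pi : orderings m d k) x xi (c : RR) :
  (0 < m)%N -> #|S| = k ->
  (forall j, if j \in S then c < Z pi x xi j else Z pi x xi j < c) ->
  recovers S pi x xi.
Proof.
move=> m0 hS good.
apply/forallP => T; apply/implyP => /andP[/eqP cT /forallP H].
rewrite eqEcard cT hS leqnn andbT.
apply/subsetP => a aT; apply/negPn/negP => aS.
have : ~~ (S \subset T).
  apply/negP => ST.
  have : S == T by rewrite eqEcard ST cT hS leqnn.
  by move/eqP => eST; move: aS; rewrite eST aT.
move=> /subsetPn [b bS bT].
have := H a; rewrite aT /= => /forallP /(_ b); rewrite in_setC bT /=.
have scE : forall j, score pi x xi j = (m%:R)^-1 * Z pi x xi j by [].
rewrite !scE ler_pM2l ?invr_gt0 ?ltr0n //.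
have := good a; rewrite (negbTE aS).
have := good b; rewrite bS.
by move=> h1 h2; rewrite leNgt (lt_trans h2 h1).
Qed.

Lemma pointwise d (w : RR) (F : 'I_d -> RR) (rec : bool) :
  0 <= w -> (~~ rec -> exists j, 0 <= F j) ->
  w - \sum_j w * expR (F j) <= (if rec then w else 0).
Proof.
move=> w0 H; case: rec H => [_|/(_ isT) [j Fj]].
  have : 0 <= \sum_j w * expR (F j).
    by apply: sumr_ge0 => j _; apply: mulr_ge0 => //; exact: expR_ge0.
  lra.
rewrite (bigD1 j) //=.
have : 0 <= \sum_(i | i != j) w * expR (F i).
  by apply: sumr_ge0 => i _; apply: mulr_ge0 => //; exact: expR_ge0.
have : w * 1 <= w * expR (F j).
  apply: ler_wpM2l => //; have := expR_ge1Dx (F j); lra.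
lra.
Qed.

Lemma term_bound m d k (S : {set 'I_d}) (pi : orderings m d k) j eta mu c :
  valid_orderings S pi ->
  0 <= eta <= 1 -> mu <= 2^-1 -> - mu <= 2^-1 ->
  \sum_(x : inputs m d) \sum_(xi : noises m k)
      weight eta x xi * expR (mu * (Z pi x xi j - c))
  <= expR (- (mu * c) + m%:R * ((if j \in S then (1 - 2 * eta) * mu else 0)
                                + #|S|%:R * (2 * mu ^+ 2))).
Proof.
move=> vo he m1 m2.
under eq_bigr => x _ do under eq_bigr => xi _ do
  rewrite mulrBr -mulrN exp.expRD mulrA mulrC.
under eq_bigr => x _ do rewrite -mulr_sumr.
rewrite -mulr_sumr exp.expRD.
rewrite mulrN; apply: ler_wpM2l; first exact: expR_ge0.
exact: mgf.
Qed.

Lemma weight_ge0 m d k eta (x : inputs m d) (xi : noises m k) :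
  0 <= eta <= 1 -> 0 <= weight eta x xi.
Proof.
move=> /andP[e0 e1]; apply: mulr_ge0; apply: prodr_ge0 => i _; apply: prodr_ge0 => t _.
  by rewrite invr_ge0 ler0n.
by rewrite /bern; case: ifP => _; lra.
Qed.

Theorem theorem11p1 :
  exists C : RR, 0 < C /\
  forall (d k : nat) (Sstar : {set 'I_d}) (eta delta : RR) (m : nat)
         (pi : orderings m d k),
    (k <= d)%N -> #|Sstar| = k ->
    0 <= eta -> eta < 2%:R^-1 ->
    0 < delta -> delta < 1 ->
    valid_orderings Sstar pi ->
    C * k%:R / (1 - 2%:R * eta) ^+ 2 * ln (d%:R / delta) <= m%:R ->
    1 - delta <= success_prob eta Sstar pi.
Proof.
exists 32; split; first lra.
move=> d k S eta delta m pi hkd hS e0 e1 d0 d1 vo hm.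
have he : 0 <= eta <= 1 by apply/andP; split; lra.
case: (posnP k) => [k0|kpos].
  have S0 : S = set0 by apply/eqP; rewrite -cards_eq0 hS k0.
  have rec : forall x xi, recovers S pi x xi.
    move=> x xi; apply/forallP => T; apply/implyP => /andP[/eqP cT _].
    by rewrite S0 -cards_eq0 cT k0.
  rewrite /success_prob.
  under eq_bigr => x _ do under eq_bigr => xi _ do rewrite rec.
  rewrite total_weight; lra.
set b : RR := 1 - 2 * eta.
have b0 : 0 < b by rewrite /b; lra.
have b1 : b <= 1 by rewrite /b; lra.
have dpos : (0 < d)%N by apply: leq_trans hkd.
have dR : 1 <= d%:R :> RR by rewrite ler1n.
have kR : 1 <= k%:R :> RR by rewrite ler1n.
set L : RR := ln (d%:R / delta).
have dd : 1 < d%:R / delta by rewrite ltr_pdivlMr // mul1r; lra.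
have L0 : 0 < L by apply: ln_gt0.
have b2 : 0 < b ^+ 2 by apply: exprn_gt0.
have hmL : L * (32 * k%:R) <= m%:R * b ^+ 2.
  have e : 32 * k%:R / b ^+ 2 * L = (L * (32 * k%:R)) / b ^+ 2.
    by field; rewrite gt_eqF.
  by move: hm; rewrite e ler_pdivrMr.
have mpos : (0 < m)%N.
  rewrite -(ltr0n RR); have : 0 < L * (32 * k%:R) by apply: mulr_gt0 => //; lra.
  nra.
set lam : RR := b / (8 * k%:R).
have lamE : lam * (8 * k%:R) = b.
  by rewrite /lam; field; rewrite gt_eqF //; lra.
have lam0 : 0 < lam by rewrite /lam; apply: divr_gt0 => //; lra.
have lam1 : lam <= 8^-1 by nra.
set c : RR := m%:R * b / 2.
pose mu (j : 'I_d) := if j \in S then - lam else lam.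
have mub : forall j, mu j <= 2^-1 /\ - mu j <= 2^-1.
  by move=> j; rewrite /mu; case: ifP => _; split; lra.
set E : RR := expR (- (m%:R * b ^+ 2 / (32 * k%:R))).
have Tb : forall j, \sum_(x : inputs m d) \sum_(xi : noises m k)
    weight eta x xi * expR (mu j * (Z pi x xi j - c)) <= E.
  move=> j; have [mb1 mb2] := mub j.
  apply: (le_trans (term_bound j c vo he mb1 mb2)).
  rewrite /E ler_expR hS le_eqVlt; apply/orP; left; apply/eqP.
  rewrite /mu /lam /c /b; case: ifP => _; field; rewrite gt_eqF //; lra.
have P : forall x xi, weight eta x xi -
    \sum_j weight eta x xi * expR (mu j * (Z pi x xi j - c))
    <= (if recovers S pi x xi then weight eta x xi else 0).
  move=> x xi; apply: pointwise; first exact: weight_ge0 he.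
  move=> nr; case: (boolP [exists j, 0 <= mu j * (Z pi x xi j - c)]) => [/existsP //|/existsPn H].
  exfalso; move/negP: nr; apply.
  apply: (good_recovers (c:=c) mpos hS) => j.
  have := H j; rewrite -ltNge /mu; case: ifP => _ h; nra.
rewrite /success_prob.
apply: (le_trans _ (ler_sum _ (fun x _ => ler_sum _ (fun xi _ => P x xi)))).
under eq_bigr => x _ do rewrite sumrB.
rewrite sumrB total_weight.
under eq_bigr => x _ do rewrite exchange_big.
rewrite exchange_big /=.
have SE : \sum_(j < d) \sum_(x : inputs m d) \sum_(xi : noises m k)
    weight eta x xi * expR (mu j * (Z pi x xi j - c)) <= d%:R * E.
  apply: (le_trans (ler_sum _ (fun j _ => Tb j))).
  by rewrite sumr_const card_ord mulr_natl.
suff : d%:R * E <= delta by move=> h; lra.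
have EL : E <= expR (- L).
  rewrite /E ler_expR lerN2 ler_pdivlMr; last lra.
  exact: hmL.
have eL : expR (- L) = (d%:R / delta)^-1.
  by rewrite expRN /L lnK // posrE; lra.
apply: (le_trans (ler_wpM2l _ EL)); first lra.
rewrite eL invf_div mulrCA divff ?mulr1 //.
by rewrite gt_eqF //; lra.
Qed.
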